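(* In the model described in the context, with $\tilde k(p)=(1+\theta)p+\alpha(p-p^2)$ for $\theta\ge0$ and $\alpha\ge0$, the indemnity $I\equiv0$ is never optimal.
   Context: Let $X\ge0$ be a random variable with $\mathbb{P}(X=0)=1-q$, where $q\in(0,1]$, and with density $q\lambda e^{-\lambda x}$ on $(0,\infty)$, where $\lambda>0$. So $S_X(t)=qe^{-\lambda t}$ for $t\ge0$. $\mathcal{I}_c$ is the set of $I:[0,\infty)\to[0,\infty)$ with $0\le I(x)\le x$ and $0\le I(x)-I(y)\le x-y$ for $0\le y\le x$. For $Y\ge0$ with $S_Y(t)=\mathbb{P}(Y>t)$, the premium is $$\pi(Y)=\int_0^\infty\tilde k(S_Y(t))\,dt.$$ This is the expected value principle with loading $\theta$ plus $\alpha$ times the Gini deviation. The buyer has wealth $w$ and utility $u$ with $u'(x)=e^{-\gamma x}$, $\gamma>0$. She chooses $I\in\mathcal{I}_c$ to maximize $\mathbb{E}[u(w-X+I(X)-\pi(I(X)))]$; the buyer's distortion is the identity. *)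

(* Defs.v *)
From HB Require Import structures.
From mathcomp Require Import all_boot all_order all_algebra.
From mathcomp Require Import all_classical all_reals all_analysis.
Set Implicit Arguments. Unset Strict Implicit. Unset Printing Implicit Defensive.
Import Order.TTheory GRing.Theory Num.Theory.
Import numFieldNormedType.Exports.
Local Open Scope classical_set_scope.
Local Open Scope ring_scope.

Section Model.
Variable R : realType.

(* Law of X: P(X = 0) = 1 - q, density q*lam*exp(-lam x) on (0,oo).
   EX q lam g = E[g(X)] for g : R -> \bar R. *)
Definition EX (q lam : R) (g : R -> \bar R) : \bar R :=
  ((1 - q)%:E * g 0%R
   + q%:E * \int[lebesgue_measure]_(x in `]0%R, +oo[) (g x * (lam * expR (- (lam * x)))%:E))%E.

Definition survI (q lam : R) (I : R -> R) (t : R) : R :=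
  fine (EX q lam (fun x => (if (t < I x)%R then 1 else 0)%:E)).

(* distortion: expected value principle with loading theta plus alpha * Gini deviation *)
Definition ktilde (theta alpha p : R) : R := (1 + theta) * p + alpha * (p - p ^+ 2).

Definition premium (q lam theta alpha : R) (I : R -> R) : R :=
  fine (\int[lebesgue_measure]_(t in `[0%R, +oo[)
          (ktilde theta alpha (survI q lam I t))%:E).

(* admissible indemnities I_c (only values on [0,oo) matter) *)
Definition Ic (I : R -> R) : Prop :=
  (forall x, 0 <= x -> 0 <= I x <= x) /\
  (forall x y, 0 <= y -> y <= x -> 0 <= I x - I y <= x - y).

Definition EU (q lam theta alpha w : R) (u : R -> R) (I : R -> R) : \bar R :=
  EX q lam (fun x => (u (w - x + I x - premium q lam theta alpha I))%:E).

End Model.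

(* Main.v *)
Require Import Defs.
From HB Require Import structures.
From mathcomp Require Import all_boot all_order all_algebra.
From mathcomp Require Import all_classical all_reals all_analysis.
From mathcomp Require Import measurable_realfun.
From mathcomp Require Import ring lra.
Import Order.TTheory GRing.Theory Num.Theory.
Import numFieldNormedType.Exports.
Local Open Scope classical_set_scope.
Local Open Scope ring_scope.
Lemma le_int_gen d (T : measurableType d) (R : realType) (mu : {measure set T -> \bar R})
  (D : set T) (f g : T -> \bar R) :
  (forall x, D x -> (f x <= g x)%E) ->
  (\int[mu]_(x in D) f x <= \int[mu]_(x in D) g x)%E.
Proof.
move=> fg; rewrite /integral /=.
have key : forall (F G : T -> \bar R), (forall x, (F x <= G x)%E) ->
  (ereal_sup [set sintegral mu (HBNNSimple.NonNegSimpleFun.sort h)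
       | h in [set h | (forall x : T,
                        ((HBNNSimple.NonNegSimpleFun.sort h x)%:E <= F x)%E)]]
  <= ereal_sup [set sintegral mu (HBNNSimple.NonNegSimpleFun.sort h)
       | h in [set h | (forall x : T,
                        ((HBNNSimple.NonNegSimpleFun.sort h x)%:E <= G x)%E)]])%E.
  move=> F G FG; apply: ge_ereal_sup => _ [h hle <-]; apply: ereal_sup_ubound.
  by exists h => // x; apply: le_trans (hle x) (FG x).
have pl : forall x, ((f \_ D) x <= (g \_ D) x)%E.
  move=> x; rewrite /patch; case: ifPn => // xD; apply: fg; by move: xD; rewrite inE.
apply: leeB; apply: key => x.
- by apply: (@funepos_le _ _ setT) => //; rewrite ?in_setT // => y _; exact: pl.
- by apply: (@funeneg_le _ _ setT) => //; rewrite ?in_setT // => y _; exact: pl.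
Qed.

Section S.
Variable R : realType.
Local Notation mu := (@lebesgue_measure R).

Lemma is_derive_expk (k x : R) :
  is_derive x 1 (fun y => expR (k * y)) (k * expR (k * x)).
Proof.
have hk : is_derive x 1 (fun y : R => k * y) k.
  have H := is_deriveZ k (is_derive_id x (1:R)).
  have -> : (fun y : R => k * y) = k \*: id by apply/funext => y.
  by move: H; rewrite /GRing.scale /= mulr1 => H.
have := @is_derive1_comp R expR (fun y => k * y) x _ _ (is_derive_expR (k * x)) hk.
by rewrite mulrC.
Qed.

Lemma u_form (u : R -> R) (gamma : R) : 0 < gamma ->
  (forall x : R, is_derive x 1 u (expR (- (gamma * x)))) ->
  forall y, u y = u 0 + gamma^-1 - gamma^-1 * expR (- gamma * y).
Proof.
move=> g0 du y.
pose h := fun z => u z + gamma^-1 * expR (- gamma * z).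
have dh : forall x : R, is_derive x (1:R) h 0.
  move=> x.
  have e1 := is_derive_expk (- gamma) x.
  have e2 := is_deriveZ gamma^-1 e1.
  have e3 := is_deriveD (du x) e2.
  refine (is_derive_eq (e3 : is_derive x 1 h _) _).
  by rewrite /GRing.scale /= !mulNr mulrN mulrA mulVf ?gt_eqF // mul1r subrr.
have := is_derive_0_is_cst y 0 dh.
rewrite /h mulr0 expR0 mulr1 => <-.
by rewrite addrK.
Qed.

Lemma cont_expk (k : R) : continuous (fun y : R => expR (k * y)).
Proof.
move=> x; apply/differentiable_continuous/derivable1_diffP.
exact: (@ex_derive _ _ _ _ _ _ _ (is_derive_expk k x)).
Qed.

Lemma int_exp (c a : R) : 0 < c ->
  (\int[mu]_(x in `]a, +oo[) (expR (- c * x))%:E = (expR (- c * a) / c)%:E)%E.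
Proof.
move=> c0.
have mf : measurable_fun setT (fun x : R => expR (- c * x)).
  exact: continuous_measurable_fun (cont_expk (- c)).
rewrite integral_itv_obnd_cbnd; last first.
  by apply/measurable_EFinP; exact: measurable_funTS.
pose F := fun x : R => (- c^-1) * expR (- c * x).
have dF : forall x, is_derive x (1:R) F (expR (- c * x)).
  move=> x; have e2 := is_deriveZ (- c^-1) (is_derive_expk (- c) x).
  refine (is_derive_eq (e2 : is_derive x 1 F _) _).
  by rewrite /GRing.scale /= mulrA mulrNN mulVf ?gt_eqF // mul1r.
have cF : continuous F.
  move=> x; apply/differentiable_continuous/derivable1_diffP.
  exact: (@ex_derive _ _ _ _ _ _ _ (dF x)).
rewrite (@ge0_continuous_FTC2y _ (fun x => expR (- c * x)) F a 0).
- by rewrite /F sub0e -EFinN mulNr opprK mulrC.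
- by move=> x _; exact: expR_ge0.
- by apply: continuous_subspaceT; exact: cont_expk.
- rewrite /F -(mulr0 (- c^-1)); apply: cvgMl_tmp.
  rewrite (_ : (fun x => expR (- c * x)) =
               (fun z => expR (- z)) \o (fun z => c * z)); last first.
    by apply: funext => x; rewrite /= mulNr.
  apply: (@cvg_comp _ _ _ _ _ _ (pinfty_nbhs R)); last exact: cvgr_expR.
  exact: gt0_cvgMry.
- by move=> x _; exact: (@ex_derive _ _ _ _ _ _ _ (dF x)).
- by apply: cvg_at_right_filter; exact: cF.
- by move=> x _; rewrite derive1E; exact: derive_val.
Qed.

Lemma int_exp_c (c a : R) : 0 < c ->
  (\int[mu]_(x in `[a, +oo[) (expR (- c * x))%:E = (expR (- c * a) / c)%:E)%E.
Proof.
move=> c0; rewrite -int_exp // -integral_itv_obnd_cbnd //.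
apply/measurable_EFinP; apply: measurable_funTS.
exact: continuous_measurable_fun (cont_expk (- c)).
Qed.

Lemma integ_exp (c a : R) : 0 < c ->
  mu.-integrable `]a, +oo[ (fun x => (expR (- c * x))%:E).
Proof.
move=> c0; apply/integrableP; split.
  apply/measurable_EFinP; apply: measurable_funTS.
  exact: continuous_measurable_fun (cont_expk (- c)).
under eq_integral do rewrite /= ger0_norm ?expR_ge0//.
by rewrite int_exp // ltry.
Qed.

Lemma integ_Kexp (K c a : R) : 0 < c ->
  mu.-integrable `]a, +oo[ (EFin \o (fun x => K * expR (- c * x))).
Proof.
move=> c0.
have H : mu.-integrable `]a, +oo[ (fun x : R => (K%:E * (expR (- c * x)%R)%:E)%E).
  by apply: integrableZl => //; exact: integ_exp.
apply: eq_integrable H => // x _; by rewrite /= EFinM.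
Qed.

Lemma int_Kexp (K c a : R) : 0 < c ->
  (\int[mu]_(x in `]a, +oo[) (EFin \o (fun x => (K * expR (- c * x))%R)) x
    = (K * (expR (- c * a) / c))%R%:E)%E.
Proof.
move=> c0.
under eq_integral => x _ do rewrite /= EFinM.
rewrite integralZl //; last exact: integ_exp.
by rewrite int_exp.
Qed.

Lemma int_lin (lam A B b a : R) : 0 < lam -> b < lam ->
  (\int[mu]_(x in `]a, +oo[) ((A + B * expR (b * x))%:E * (lam * expR (- (lam * x)))%:E)
   = (A * expR (- lam * a) + B * lam * expR (- (lam - b) * a) / (lam - b))%:E)%E.
Proof.
move=> l0 bl; have lb0 : 0 < lam - b by rewrite subr_gt0.
transitivity (\int[mu]_(x in `]a, +oo[)
   ((EFin \o (fun x => ((A * lam) * expR (- lam * x))%R)) \+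
    (EFin \o (fun x => ((B * lam) * expR (- (lam - b) * x))%R))) x)%E.
  apply: eq_integral => x _; rewrite /= -EFinM -EFinD; congr EFin.
  rewrite mulrDl -!mulrA; congr (_ + _); first by rewrite mulNr.
  congr (_ * _); rewrite mulrCA; congr (_ * _); rewrite -expRD; congr expR.
  by rewrite mulNr mulrBl opprB.
rewrite integralD_EFin //; [|exact: integ_Kexp|exact: integ_Kexp].
rewrite !int_Kexp // -EFinD; congr EFin.
by field; rewrite !gt_eqF.
Qed.

Lemma integ_lin (lam A B b a : R) : 0 < lam -> b < lam ->
  mu.-integrable `]a, +oo[ (fun x => ((A + B * expR (b * x))%:E * (lam * expR (- (lam * x)))%:E)%E).
Proof.
move=> l0 bl; have lb0 : 0 < lam - b by rewrite subr_gt0.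
have H : mu.-integrable `]a, +oo[
   ((EFin \o (fun x => ((A * lam) * expR (- lam * x))%R)) \+
    (EFin \o (fun x => ((B * lam) * expR (- (lam - b) * x))%R)))%E.
  by apply: integrableD => //; exact: integ_Kexp.
apply: eq_integrable H => // x _.
rewrite /= -EFinM -EFinD; congr EFin.
rewrite mulrDl -!mulrA; congr (_ + _); first by rewrite mulNr.
congr (_ * _); rewrite mulrCA; congr (_ * _); rewrite -expRD; congr expR.
by rewrite mulNr mulrBl opprB.
Qed.

Lemma EX_le (q lam : R) (g g' : R -> \bar R) : 0 <= q -> q <= 1 -> 0 <= lam ->
  (g 0%R <= g' 0%R)%E -> (forall x, 0 < x -> (g x <= g' x)%E) ->
  (EX q lam g <= EX q lam g')%E.
Proof.
move=> q0 q1 l0 g00 gg; rewrite /EX; apply: leeD.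
  by apply: lee_wpmul2l => //; rewrite lee_fin subr_ge0.
apply: lee_wpmul2l; first by rewrite lee_fin.
apply: le_int_gen => x; rewrite /= in_itv /= andbT => x0.
apply: lee_wpmul2r; last exact: gg.
by rewrite lee_fin mulr_ge0 // expR_ge0.
Qed.

Lemma EX_lin (q lam A B b : R) : 0 < lam -> b < lam ->
  EX q lam (fun x => (A + B * expR (b * x))%:E) =
  ((1 - q) * (A + B) + q * (A + B * lam / (lam - b)))%:E.
Proof.
move=> l0 bl; rewrite /EX int_lin // !mulr0 expR0 !mulr1 -!EFinM -EFinD.
by [].
Qed.

Lemma EX_patch (q lam A B K b d : R) : 0 < lam -> b < lam -> 0 <= d ->
  EX q lam (fun x => (A + B * expR (b * x) +
      K * (if d < x then expR (b * x) - expR (b * d) else 0))%:E) =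
  ((1 - q) * (A + B) + q * (A + B * lam / (lam - b) +
     K * (- expR (b * d) * expR (- lam * d) + 1 * lam * expR (- (lam - b) * d) / (lam - b))))%:E.
Proof.
move=> l0 bl d0.
pose h := fun x : R => (K * ((- expR (b * d) + 1 * expR (b * x)) * (lam * expR (- (lam * x)))))%R.
have ih : mu.-integrable `]d, +oo[ (EFin \o h).
  have H : mu.-integrable `]d, +oo[ (fun x => K%:E *
     ((- expR (b * d) + 1 * expR (b * x))%:E * (lam * expR (- (lam * x)))%:E))%E.
    by apply: integrableZl => //; exact: integ_lin.
  apply: eq_integrable H => // x _; by rewrite /h /= !EFinM.
have ip : mu.-integrable `]0, +oo[ ((EFin \o h) \_ `]d, +oo[).
  apply: (@integrableS _ _ _ _ setT) => //.
  by apply/(integrable_mkcond _ _).1.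
have i1 := @integ_lin lam A B b 0 l0 bl.
rewrite /EX.
transitivity ((1 - q)%:E * (A + B)%:E + q%:E * (\int[mu]_(x in `]0%R, +oo[)
   (((A + B * expR (b * x))%:E * (lam * expR (- (lam * x)))%:E) + ((EFin \o h) \_ `]d, +oo[) x)))%E.
  congr (_ * _ + _ * _)%E.
    by rewrite ltNge d0 /= !mulr0 expR0 mulr1 addr0.
  apply: eq_integral => x; rewrite inE /= in_itv /= andbT => x0.
  rewrite /patch; case: ifPn => dx.
    rewrite mem_set /=; last by rewrite in_itv /= dx.
    by rewrite /h -!EFinM -EFinD; congr EFin; ring.
  rewrite ifF /=; last first.
    by apply/negbTE; apply: contra dx; rewrite inE /= in_itv /= andbT.
  by rewrite mulr0 addr0 adde0.
rewrite integralD //.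
rewrite int_lin // -integral_mkcondr setIidr; last first.
  by move=> x /=; rewrite !in_itv /= !andbT => /(le_lt_trans d0).
under eq_integral => x _ do rewrite /h /= !EFinM.
rewrite integralZl //; last exact: integ_lin.
rewrite int_lin // -!EFinM -!EFinD; congr EFin.
rewrite !mulr0 expR0 !mulr1; ring.
Qed.

Lemma fine_le_b (x : \bar R) (b : R) : 0 <= b -> (x <= b%:E)%E -> fine x <= b.
Proof. by case: x => [r| |] //= b0; rewrite lee_fin. Qed.

Lemma ktilde_le (th al s : R) : 0 <= al -> ktilde th al s <= (1 + th + al) * s.
Proof.
move=> a0; rewrite /ktilde.
have : 0 <= al * s ^+ 2 by rewrite mulr_ge0 // sqr_ge0.
nra.
Qed.

Lemma premium0 (q lam th al : R) : premium q lam th al (fun _ => 0) = 0.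
Proof.
rewrite /premium integral0_eq // => t; rewrite /= in_itv /= andbT => t0.
rewrite /survI ltNge t0 /= /EX (@integral0_eq _ _ _ _ _ (fun x => (0%:E * _)%E)).
  by rewrite !mule0 adde0 /= /ktilde expr2 !mulr0 subr0 mulr0 addr0.
by move=> x _; rewrite mul0e.
Qed.

Lemma premium_le (q lam th al d k : R) : 0 <= q -> q <= 1 -> 0 < lam ->
  0 <= th -> 0 <= al -> 0 <= d -> 0 < k -> k < lam ->
  premium q lam th al (fun x => Num.max (x - d) 0) <=
  (1 + th + al) * ((1 - q) + q * lam / (lam - k)) * expR (- k * d) / k.
Proof.
move=> q0 q1 l0 th0 al0 d0 k0 kl.
set W := (1 - q) + q * lam / (lam - k).
have lk0 : 0 < lam - k by rewrite subr_gt0.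
have W0 : 0 <= W.
  by rewrite /W addr_ge0 ?subr_ge0 // mulr_ge0 ?invr_ge0 ?mulr_ge0 // ltW.
have c0 : 0 <= 1 + th + al by rewrite !addr_ge0.
have hS : forall t, 0 <= t ->
    survI q lam (fun x => Num.max (x - d) 0) t <= W * expR (- k * d) * expR (- k * t).
  move=> t t0; rewrite /survI; apply: fine_le_b.
    by rewrite !mulr_ge0 // expR_ge0.
  have pw : forall x, 0 <= x -> ((if t < Num.max (x - d) 0 then 1 else 0)%:E <=
        (0 + expR (- k * (d + t)) * expR (k * x))%:E)%E.
    move=> x x0; rewrite lee_fin add0r; case: ifPn => h.
      rewrite lt_max (ltNge t 0) t0 orbF in h.
      rewrite -expRD; apply: le_trans (expR_ge1Dx _); rewrite lerDl.
      rewrite mulNr mulrDr; nra.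
    by rewrite mulr_ge0 // expR_ge0.
  apply: le_trans (@EX_le q lam _ (fun x => (0 + expR (- k * (d + t)) * expR (k * x))%:E)
       q0 q1 (ltW l0) (pw 0 (lexx 0)) (fun x x0 => pw x (ltW x0))) _.
  rewrite EX_lin // lee_fin.
  rewrite (_ : expR (- k * (d + t)) = expR (- k * d) * expR (- k * t)); last first.
    by rewrite -expRD mulrDr.
  rewrite le_eqVlt; apply/orP; left; apply/eqP; rewrite /W; field.
  by rewrite gt_eqF.
rewrite /premium; apply: fine_le_b.
  by rewrite !mulr_ge0 ?invr_ge0 ?expR_ge0 // ltW.
apply: le_trans (@le_int_gen _ _ _ mu _ _ (fun t => ((1 + th + al) * W * expR (- k * d) * expR (- k * t))%:E) _) _.
  move=> t; rewrite /= in_itv /= andbT => t0; rewrite lee_fin.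
  apply: le_trans (@ktilde_le th al _ al0) _.
  by rewrite -!mulrA; apply: ler_wpM2l => //; rewrite mulrA; exact: hS.
rewrite -integral_itv_obnd_cbnd; last first.
  apply/measurable_EFinP; apply: measurable_funM => //.
  apply: measurable_funTS; exact: continuous_measurable_fun (cont_expk (- k)).
have := @int_Kexp ((1 + th + al) * W * expR (- k * d)) k 0 k0.
rewrite /= => ->; rewrite lee_fin mulr0 expR0.
by rewrite mul1r.
Qed.

Lemma Ic_stop (d : R) : 0 <= d -> Ic (fun x => Num.max (x - d) 0).
Proof.
move=> d0; split.
  move=> x x0; apply/andP; split; first by rewrite le_max lexx orbT.
  by rewrite ge_max x0 andbT lerBlDr lerDl.
move=> x y y0 yx.
have [h1|h1] := leP 0 (x - d); have [h2|h2] := leP 0 (y - d);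
  rewrite ?(max_l h1) ?(max_l h2) ?(max_r (ltW h1)) ?(max_r (ltW h2));
  apply/andP; split; lra.
Qed.

Lemma EU0_le (q lam th al gamma w beta : R) (u : R -> R) :
  0 <= q -> q <= 1 -> 0 < lam -> 0 < gamma -> beta <= gamma -> beta < lam ->
  (forall y, u y = u 0 + gamma^-1 - gamma^-1 * expR (- gamma * y)) ->
  (EU q lam th al w u (fun _ => 0%R) <=
   ((1 - q) * ((u 0 + gamma^-1) + - (gamma^-1 * expR (- gamma * w))) +
    q * ((u 0 + gamma^-1) + - (gamma^-1 * expR (- gamma * w)) * lam / (lam - beta)))%:E)%E.
Proof.
move=> q0 q1 l0 g0 bg bl hu.
rewrite /EU premium0 -EX_lin //.
have pw : forall x, 0 <= x -> ((u (w - x + 0 - 0))%:E <=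
   ((u 0 + gamma^-1) + - (gamma^-1 * expR (- gamma * w)) * expR (beta * x))%:E)%E.
  move=> x x0; rewrite lee_fin hu addr0 subr0.
  have e1 : expR (- gamma * (w - x)) = expR (- gamma * w) * expR (gamma * x).
    by rewrite -expRD; congr expR; ring.
  rewrite e1.
  have e2 : expR (beta * x) <= expR (gamma * x) by rewrite ler_expR ler_wpM2r.
  have p0 : 0 < gamma^-1 * expR (- gamma * w) by rewrite mulr_gt0 ?invr_gt0 ?expR_gt0.
  nra.
apply: EX_le => //; [exact: ltW | exact: pw | move=> x x0; exact: pw (ltW x0)].
Qed.

Lemma EUI_full (q lam th al gamma w P : R) (u : R -> R) :
  0 <= q -> q <= 1 -> 0 < lam -> 0 < gamma ->
  (forall y, u y = u 0 + gamma^-1 - gamma^-1 * expR (- gamma * y)) ->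
  premium q lam th al (fun x => Num.max (x - 0) 0) = P ->
  (((1 - q) * (((u 0 + gamma^-1) + - (gamma^-1 * expR (- gamma * w)) * expR (gamma * P)) + 0) +
    q * (((u 0 + gamma^-1) + - (gamma^-1 * expR (- gamma * w)) * expR (gamma * P)) + 0 * lam / (lam - 0)))%:E
   <= EU q lam th al w u (fun x => (Num.max (x - 0) 0)%R))%E.
Proof.
move=> q0 q1 l0 g0 hu hP.
rewrite /EU hP -(@EX_lin q lam _ 0 0) //.
have pw : forall x, 0 <= x ->
   ((((u 0 + gamma^-1) + - (gamma^-1 * expR (- gamma * w)) * expR (gamma * P)) + 0 * expR (0 * x))%:E
    <= (u (w - x + Num.max (x - 0) 0 - P))%:E)%E.
  move=> x x0; rewrite lee_fin subr0 (max_l x0) subrK (hu (w - P)) mul0r addr0.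
  have -> : expR (- gamma * (w - P)) = expR (- gamma * w) * expR (gamma * P).
    by rewrite -expRD; congr expR; ring.
  by rewrite mulrA mulNr.


apply: EX_le => //; [exact: ltW | exact: pw | move=> x x0; exact: pw (ltW x0)].
Qed.

Lemma EUI_stop (q lam th al gamma w d P : R) (u : R -> R) :
  0 <= q -> q <= 1 -> 0 < lam -> 0 < gamma -> gamma < lam -> 0 <= d ->
  (forall y, u y = u 0 + gamma^-1 - gamma^-1 * expR (- gamma * y)) ->
  premium q lam th al (fun x => (Num.max (x - d) 0)%R) = P ->
  (((1 - q) * ((u 0 + gamma^-1) + (- (gamma^-1 * expR (- gamma * w)) * expR (gamma * P))) +
    q * ((u 0 + gamma^-1) + (- (gamma^-1 * expR (- gamma * w)) * expR (gamma * P)) * lam / (lam - gamma) +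
     (- (- (gamma^-1 * expR (- gamma * w)) * expR (gamma * P))) *
       (- expR (gamma * d) * expR (- lam * d) + 1 * lam * expR (- (lam - gamma) * d) / (lam - gamma))))%:E
   <= EU q lam th al w u (fun x => (Num.max (x - d) 0)%R))%E.
Proof.
move=> q0 q1 l0 g0 gl d0 hu hP.
rewrite /EU hP -EX_patch //.
have ex : forall z, expR (- gamma * (w - z - P)) =
    expR (- gamma * w) * expR (gamma * P) * expR (gamma * z).
  by move=> z; rewrite -!expRD; congr expR; ring.
have pw : forall x, 0 <= x ->
   (((u 0 + gamma^-1) + (- (gamma^-1 * expR (- gamma * w)) * expR (gamma * P)) * expR (gamma * x) +
     (- (- (gamma^-1 * expR (- gamma * w)) * expR (gamma * P))) *
       (if d < x then expR (gamma * x) - expR (gamma * d) else 0))%:E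
    <= (u (w - x + Num.max (x - d) 0 - P))%:E)%E.
  move=> x x0; rewrite lee_fin le_eqVlt; apply/orP; left; apply/eqP.
  case: ifPn => dx.
    rewrite (max_l (ltW _)); last by rewrite subr_gt0.
    have -> : w - x + (x - d) - P = w - d - P by ring.
    by rewrite (hu (w - d - P)) ex; ring.
  rewrite (max_r _); last by rewrite subr_le0 leNgt.
  by rewrite addr0 (hu (w - x - P)) ex; ring.
apply: EX_le => //; [exact: ltW | exact: pw | move=> x x0; exact: pw (ltW x0)].
Qed.

Lemma final_real (M0 a E y dl : R) : 0 < a -> 0 < dl -> 0 <= y -> y < 1 ->
  M0 * y < a * dl -> 0 <= M0 - a * dl -> E <= expR y -> E * (M0 - a * dl) < M0.
Proof.
move=> a0 dl0 y0 y1 hM hN hE.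
have ey0 : 0 < expR y := expR_gt0 y.
have h1 : expR y * (1 - y) <= 1.
  have := expR_ge1Dx (- y); rewrite -(ler_pM2l ey0) -expRD subrr expR0.
  by rewrite mulrC.
have M00 : 0 < M0 by have := mulr_gt0 a0 dl0; lra.
have k1 : E * (M0 - a * dl) <= expR y * (M0 - a * dl) by rewrite ler_wpM2r.
have k2 : 0 < expR y * (a * dl - M0 * y) by rewrite mulr_gt0 // subr_gt0.
have k3 : M0 * (expR y * (1 - y)) <= M0 * 1 by rewrite ler_wpM2l // ltW.
nra.
Qed.
End S.

Theorem proposition4p5 (R : realType) (q lam theta alpha gamma w : R) (u : R -> R) :
  0 < q -> q <= 1 -> 0 < lam -> 0 <= theta -> 0 <= alpha -> 0 < gamma ->
  (forall x : R, is_derive x 1 u (expR (- (gamma * x)))) ->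
  exists I : R -> R, Ic I /\
    (EU q lam theta alpha w u (fun _ => 0%R) < EU q lam theta alpha w u I)%E.
Proof.
move=> q0 q1 l0 th0 al0 g0 du.
have hu := @u_form R u gamma g0 du.
have Bc0 : 0 < gamma^-1 * expR (- gamma * w) by rewrite mulr_gt0 ?invr_gt0 ?expR_gt0.
set Bc := gamma^-1 * expR (- gamma * w) in Bc0.
case: (ltP gamma lam) => [gl|lg].
- (* case gamma < lam : stop-loss with large deductible *)
  pose k := lam - gamma / 2.
  have k0 : 0 < k by rewrite /k; lra.
  have kl : k < lam by rewrite /k; lra.
  pose W := (1 - q) + q * lam / (lam - k).
  have W0 : 0 <= W.
    by rewrite /W addr_ge0 ?subr_ge0 // ?divr_ge0 ?mulr_ge0 // ?subr_ge0 ltW.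
  pose K1 := (1 + theta + alpha) * W / k.
  have K10 : 0 <= K1 by rewrite /K1 divr_ge0 ?mulr_ge0 // ?ltW //; lra.
  pose M0 := 1 - q + q * lam / (lam - gamma).
  have lg0 : 0 < lam - gamma by rewrite subr_gt0.
  pose a := q * gamma / (lam - gamma).
  have a0 : 0 < a by rewrite /a divr_gt0 ?mulr_gt0.
  have M00 : 0 <= M0.
    by rewrite /M0 addr_ge0 ?subr_ge0 // divr_ge0 ?mulr_ge0 // ltW.
  pose L := 1 + gamma * K1 + M0 * gamma * K1 / a.
  have gK0 : 0 <= gamma * K1 by rewrite mulr_ge0 // ltW.
  have MK0 : 0 <= M0 * gamma * K1 / a.
    by apply: divr_ge0; [apply: mulr_ge0 => //; apply: mulr_ge0 => //; exact: ltW | exact: ltW].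
  have L1 : 1 <= L by rewrite /L; lra.
  pose d := 2 * (L - 1) / gamma.
  have d0 : 0 <= d by apply: divr_ge0; [apply: mulr_ge0; lra | exact: ltW].
  exists (fun x => (Num.max (x - d) 0)%R); split; first exact: Ic_stop.
  have hP := @premium_le R q lam theta alpha d k (ltW q0) q1 l0 th0 al0 d0 k0 kl.
  set P := premium q lam theta alpha (fun x => (Num.max (x - d) 0)%R) in hP *.
  have h0 := @EU0_le R q lam theta alpha gamma w gamma u (ltW q0) q1 l0 g0 (lexx _) gl hu.
  have hI := @EUI_stop R q lam theta alpha gamma w d P u (ltW q0) q1 l0 g0 gl d0 hu erefl.
  apply: le_lt_trans h0 _; apply: lt_le_trans hI; rewrite lte_fin -subr_gt0.
  pose dl := expR (- (lam - gamma) * d).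
  have e1 : - expR (gamma * d) * expR (- lam * d) = - dl.
    by rewrite mulNr -expRD; congr (- expR _); ring.
  rewrite e1 -/Bc.
  set E := expR (gamma * P).
  have -> : (1 - q) * (u 0 + gamma^-1 + - Bc * E) +
     q * (u 0 + gamma^-1 + - Bc * E * lam / (lam - gamma) +
          - (- Bc * E) * (- dl + 1 * lam * dl / (lam - gamma))) -
     ((1 - q) * (u 0 + gamma^-1 + - Bc) +
      q * (u 0 + gamma^-1 + - Bc * lam / (lam - gamma))) =
     Bc * (M0 - E * (M0 - a * dl)).
    by rewrite /M0 /a; field; rewrite !gt_eqF.
  apply: mulr_gt0 => //; rewrite subr_gt0.
  pose eps := expR (- (gamma / 2) * d).
  have ekd : expR (- k * d) = dl * eps by rewrite -expRD; congr expR; rewrite /k; field.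
  pose y := gamma * ((1 + theta + alpha) * W * expR (- k * d) / k).
  have ye : y = gamma * K1 * (dl * eps).
    by rewrite /y /K1 ekd; field; rewrite gt_eqF.
  have dl0 : 0 < dl := expR_gt0 _.
  have dl1 : dl <= 1.
    rewrite /dl -expR0 ler_expR mulNr oppr_le0; exact: mulr_ge0 (ltW _) d0.
  have eps0 : 0 < eps := expR_gt0 _.
  have epsL : eps * L <= 1.
    have gd : gamma / 2 * d = L - 1 by rewrite /d; field; rewrite gt_eqF.
    have := expR_ge1Dx (L - 1); rewrite addrC subrK => hL.
    have : eps * expR (L - 1) = 1.
      by rewrite /eps -expRD mulNr gd addNr expR0.
    move=> he; rewrite -he; apply: ler_wpM2l => //; exact: ltW.
  apply: (@final_real R M0 a E y dl) => //.
  - by rewrite ye; apply: mulr_ge0 => //; apply: mulr_ge0 => //; exact: ltW.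
  - rewrite ye.
    have h1 : gamma * K1 * (dl * eps) <= gamma * K1 * eps.
      by apply: ler_wpM2l => //; rewrite -[leRHS]mul1r; apply: ler_wpM2r => //; exact: ltW.
    have h2 : gamma * K1 * eps * L <= gamma * K1.
      by rewrite -mulrA -[leRHS]mulr1; apply: ler_wpM2l.
    have h3 : gamma * K1 < L by rewrite /L; lra.
    nra.
  - rewrite ye.
    have h2 : M0 * gamma * K1 * eps * L <= M0 * gamma * K1.
      rewrite -mulrA -[leRHS]mulr1; apply: ler_wpM2l => //.
      by rewrite -mulrA mulr_ge0.
    have h3 : a * L = a * (1 + gamma * K1) + M0 * gamma * K1.
      by rewrite /L; field; rewrite gt_eqF.
    have h4 : 0 < a * (1 + gamma * K1) by rewrite mulr_gt0 //; lra.
    have h5 : M0 * gamma * K1 * eps < a.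
      have hL0 : 0 < L by lra.
      rewrite -(ltr_pM2r hL0); nra.
    have : M0 * gamma * K1 * eps * dl < a * dl by rewrite ltr_pM2r.
    by move=> h6; rewrite !mulrA; rewrite !mulrA in h6; nra.
  - have -> : M0 - a * dl = 1 + q * gamma * (1 - dl) / (lam - gamma).
      by rewrite /M0 /a; field; rewrite gt_eqF.
    by apply: addr_ge0 => //; rewrite divr_ge0 ?mulr_ge0 // ?subr_ge0 // ltW.
  - by rewrite ler_expR /y; apply: ler_wpM2l => //; exact: ltW.
-
  exists (fun x => (Num.max (x - 0) 0)%R); split; first exact: Ic_stop.
  set P := premium q lam theta alpha (fun x => (Num.max (x - 0) 0)%R).
  set E := expR (gamma * P).
  have E0 : 0 < E := expR_gt0 _.
  set beta := lam - lam * q / (2 * E).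
  have bl : beta < lam.
    by rewrite /beta ltrBlDr ltrDl !mulr_gt0 // invr_gt0 mulr_gt0.
  have bg : beta <= gamma by apply: ltW; apply: lt_le_trans bl lg.
  have h0 := @EU0_le R q lam theta alpha gamma w beta u (ltW q0) q1 l0 g0 bg bl hu.
  have hI := @EUI_full R q lam theta alpha gamma w P u (ltW q0) q1 l0 g0 hu erefl.
  apply: le_lt_trans h0 _; apply: lt_le_trans hI; rewrite lte_fin.
  rewrite -subr_gt0.
  have lb : lam - beta = lam * q / (2 * E) by rewrite /beta opprB addrC subrK.
  rewrite lb -/Bc.
  have -> : (1 - q) * (u 0 + gamma^-1 + - Bc * E + 0) +
     q * (u 0 + gamma^-1 + - Bc * E + 0 * lam / (lam - 0)) -
     ((1 - q) * (u 0 + gamma^-1 + - Bc) +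
      q * (u 0 + gamma^-1 + - Bc * lam / (lam * q / (2 * E)))) = Bc * (1 - q + E).
    by field; rewrite !gt_eqF.
  by apply: mulr_gt0 => //; lra.
Qed.
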